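(* Let $C$ be a finite set of level constraints in normal form with $\mathcal{I}(C) \cap \mathcal{I}_{fresh} = \emptyset$. If $C; id \leadsto^* \bot$ by a finite sequence of unification steps, then there is no level substitution $\theta$ with $\theta \vDash C$.
   Context: Levels: $l ::= i \mid \mathtt{z} \mid \mathtt{s}\,l \mid l \sqcup l'$, $i$ in an infinite totally ordered set $\mathcal{I}$ of level variables; $\simeq$ is the smallest congruence (closed under constructors and substitution of levels for variables) containing $i_1 \sqcup (i_2 \sqcup i_3) \approx (i_1 \sqcup i_2) \sqcup i_3$, $i_1 \sqcup i_2 \approx i_2 \sqcup i_1$, $\mathtt{s}(i_1 \sqcup i_2) \approx \mathtt{s}\,i_1 \sqcup \mathtt{s}\,i_2$, $i \sqcup \mathtt{s}\,i \approx \mathtt{s}\,i$, $i \sqcup \mathtt{z} \approx i$, $i \sqcup i \approx i$. Normal form of levels: $\mathtt{s}^k\,\mathtt{z} \sqcup (\sqcup_{i \in V} \mathtt{s}^{n_i}\,i)$ with $V$ a strictly increasing sequence of variables, $n_i \le k$; every $l$ has a unique normal form $\hat l \simeq l$. A constraint $l_1 = l_2$ is in normal form if both sides are in normal form, each variable occurring on both sides has the same exponent on both sides, and at least one exponent (of $\mathtt{z}$ or of a variable, on either side) is $0$; $\widehat{C}$ denotes putting each constraint of $C$ in normal form (normalize both sides, for a variable on both sides drop the occurrence with smaller exponent, then subtract the minimum exponent from all exponents). $\theta \vDash C$ means $l_1\theta \simeq l_2\theta$ for all $l_1 = l_2 \in C$. $id$ is the identity substitution. For substitutions: $dom\,\theta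 = \{i \mid i\theta \ne i\}$; $\mathcal{I}(l)$ is the set of variables of $l$; $range\,\theta = \bigcup_{i \in dom\,\theta} \mathcal{I}(i\theta)$; $\mathcal{I}(\theta) = dom\,\theta \cup range\,\theta$; $\widehat{\theta} = \{i \mapsto \widehat{i\theta}\}_{i \in dom\,\theta}$; $\theta\{l/j\} = \{i \mapsto (i\theta)\{l/j\}\}_{i \in dom\,\theta}$; $\mathcal{I}_{fresh} \subsetneq \mathcal{I}$ is a fixed infinite set of fresh variables. In normal-form levels, $\mathtt{z} \sqcup i$ means $\mathtt{s}^0\mathtt{z} \sqcup \mathtt{s}^0 i$, and ''$\mathtt{s}^m\,x \in l$'' means $\mathtt{s}^m\,x$ is a summand of $l$. The unification steps on pairs $C;\theta$ are: (Trivial) $\{l = l\} \cup C; \theta \leadsto C; \theta$. (Orient) $\{l = l'\} \cup C; \theta \leadsto \{l' = l\} \cup C; \theta$ if $l'$ is $\mathtt{z}$ or $\mathtt{z} \sqcup i$. (Eliminate 1) $\{\mathtt{z} \sqcup i = l\} \cup C; \theta \leadsto \widehat{C\{l/i\}}; (\widehat{\theta\{l/i\}}, i \mapsto l)$ if $i$ does not occur in $l$. (Eliminate 2) $\{\mathtt{z} \sqcup i = l\} \cup C; \theta \leadsto \widehat{C\{l'/i\}}; (\widehat{\theta\{l'/i\}}, i \mapsto l')$ where $l' = l\{i'/i\}$ for some $i' \in \mathcal{I}_{fresh} \setminus \mathcal{I}(i, l, C, \theta)$, if $\mathtt{s}^0\,i \in l$. (Decompose) $\{\mathtt{z} = \mathtt{z}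 \sqcup (\sqcup_{i \in V} i)\} \cup C; \theta \leadsto \{\mathtt{z} \sqcup i = \mathtt{z}\}_{i \in V} \cup C; \theta$. (Clash) $\{\mathtt{z} = l\} \cup C; \theta \leadsto \bot$ if $\mathtt{s}^n\,i \in l$ or $\mathtt{s}^n\,\mathtt{z} \in l$ for some $n \ne 0$. *)

(* Defs.v *)
From HB Require Import structures.
From mathcomp Require Import all_boot.

Set Implicit Arguments.
Unset Strict Implicit.
Unset Printing Implicit Defensive.

(* Level variables: the infinite totally ordered set I is taken to be nat. *)
Inductive Level : Type :=
| LVar of nat
| LZ
| LS of Level
| LMax of Level & Level.

Fixpoint level_eqb (a b : Level) : bool :=
  match a, b with
  | LVar i, LVar j => i == j
  | LZ, LZ => true
  | LS a', LS b' => level_eqb a' b'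
  | LMax a1 a2, LMax b1 b2 => level_eqb a1 b1 && level_eqb a2 b2
  | _, _ => false
  end.

Lemma level_eqP : Equality.axiom level_eqb.
Proof.
elim=> [i||a IH|a1 IH1 a2 IH2] [j||b|b1 b2] /=; try by constructor.
- by apply: (iffP eqP) => [->|[]].
- by apply: (iffP (IH b)) => [->|[]].
- apply: (iffP andP) => [[/IH1 -> /IH2 ->]|[<- <-]] //.
  by split; [apply/IH1|apply/IH2].
Qed.

HB.instance Definition _ := hasDecEq.Build Level level_eqP.

Definition sn (n : nat) (l : Level) : Level := iter n LS l.

Inductive lequiv : Level -> Level -> Prop :=
| le_refl l : lequiv l l
| le_sym a b : lequiv a b -> lequiv b a
| le_trans a b c : lequiv a b -> lequiv b c -> lequiv a c
| le_S a b : lequiv a b -> lequiv (LS a) (LS b)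
| le_Max a a' b b' : lequiv a a' -> lequiv b b' -> lequiv (LMax a b) (LMax a' b')
| ax_assoc l1 l2 l3 : lequiv (LMax l1 (LMax l2 l3)) (LMax (LMax l1 l2) l3)
| ax_comm l1 l2 : lequiv (LMax l1 l2) (LMax l2 l1)
| ax_Sdist l1 l2 : lequiv (LS (LMax l1 l2)) (LMax (LS l1) (LS l2))
| ax_Sabs l : lequiv (LMax l (LS l)) (LS l)
| ax_zero l : lequiv (LMax l LZ) l
| ax_idem l : lequiv (LMax l l) l.

Fixpoint vars (l : Level) : seq nat :=
  match l with
  | LVar i => [:: i]
  | LZ => [::]
  | LS l' => vars l'
  | LMax a b => vars a ++ vars b
  end.

Fixpoint lsubst (th : nat -> Level) (l : Level) : Level :=
  match l with
  | LVar i => th i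
  | LZ => LZ
  | LS l' => LS (lsubst th l')
  | LMax a b => LMax (lsubst th a) (lsubst th b)
  end.

Definition lsubst1 (l' : Level) (j : nat) (l : Level) : Level :=
  lsubst (fun x => if x == j then l' else LVar x) l.

(* data (k, [:: (i1,n1); ...; (im,nm)]) represents
   s^k z |_| (s^n1 i1 |_| (s^n2 i2 |_| ... s^nm im)), or s^k z if m = 0 *)
Fixpoint joinl (vs : seq (nat * nat)) : Level :=
  match vs with
  | [::] => LZ
  | [:: p] => sn p.2 (LVar p.1)
  | p :: vs' => LMax (sn p.2 (LVar p.1)) (joinl vs')
  end.

Definition nf_level (k : nat) (vs : seq (nat * nat)) : Level :=
  match vs with
  | [::] => sn k LZ
  | _ => LMax (sn k LZ) (joinl vs)
  end.

Definition nf_valid (k : nat) (vs : seq (nat * nat)) : bool :=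
  sorted ltn (map fst vs) && all (fun p => p.2 <= k) vs.

Definition is_nf (l : Level) : Prop :=
  exists k vs, nf_valid k vs /\ l = nf_level k vs.

Fixpoint ins (p : nat * nat) (vs : seq (nat * nat)) : seq (nat * nat) :=
  match vs with
  | [::] => [:: p]
  | q :: vs' =>
      if p.1 < q.1 then p :: vs
      else if p.1 == q.1 then (p.1, maxn p.2 q.2) :: vs'
      else q :: ins p vs'
  end.

Definition mergeV (vs ws : seq (nat * nat)) : seq (nat * nat) := foldr ins ws vs.

Fixpoint norm (l : Level) : nat * seq (nat * nat) :=
  match l with
  | LZ => (0, [::])
  | LVar i => (0, [:: (i, 0)])
  | LS l' => let: (k, vs) := norm l' in (k.+1, [seq (p.1, p.2.+1) | p <- vs])
  | LMax a b => let: (ka, va) := norm a in let: (kb, vb) := norm b in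
                (maxn ka kb, mergeV va vb)
  end.

Definition hat (l : Level) : Level := nf_level (norm l).1 (norm l).2.

(* summands s^m x of a (normal-form) level: (m, None) for s^m z,
   (m, Some i) for s^m i *)
Fixpoint atoms (l : Level) : seq (nat * option nat) :=
  match l with
  | LZ => [:: (0, None)]
  | LVar i => [:: (0, Some i)]
  | LS l' => match l' with
             | LMax _ _ => [::]
             | _ => [seq (p.1.+1, p.2) | p <- atoms l']
             end
  | LMax a b => atoms a ++ atoms b
  end.

Definition cstr := (Level * Level)%type.

Definition cvars (c : cstr) : seq nat := vars c.1 ++ vars c.2.

Definition csubst1 (l' : Level) (j : nat) (c : cstr) : cstr :=
  (lsubst1 l' j c.1, lsubst1 l' j c.2).

Definition cstr_nf (c : cstr) : Prop :=
  exists k1 vs1 k2 vs2,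
    nf_valid k1 vs1 /\ nf_valid k2 vs2 /\
    c.1 = nf_level k1 vs1 /\ c.2 = nf_level k2 vs2 /\
    (forall i n m, (i, n) \in vs1 -> (i, m) \in vs2 -> n = m) /\
    ((k1 == 0) || (k2 == 0) || has (fun p => p.2 == 0) (vs1 ++ vs2)).

(* \hat c : normalize both sides, drop for each variable on both sides the
   occurrence with smaller exponent, subtract the minimum exponent *)
Definition cnorm_data (k1 : nat) (vs1 : seq (nat * nat))
                      (k2 : nat) (vs2 : seq (nat * nat)) : cstr :=
  let keep ws := fun p : nat * nat =>
      all (fun q : nat * nat => (q.1 != p.1) || (q.2 <= p.2)) ws in
  let vs1' := filter (keep vs2) vs1 in
  let vs2' := filter (keep vs1) vs2 in
  let m := foldr minn (minn k1 k2) (map snd (vs1' ++ vs2')) in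
  (nf_level (k1 - m) [seq (p.1, p.2 - m) | p <- vs1'],
   nf_level (k2 - m) [seq (p.1, p.2 - m) | p <- vs2']).

Definition cnorm (c : cstr) : cstr :=
  cnorm_data (norm c.1).1 (norm c.1).2 (norm c.2).1 (norm c.2).2.

Definition sat (th : nat -> Level) (C : seq cstr) : Prop :=
  forall c, c \in C -> lequiv (lsubst th c.1) (lsubst th c.2).

Definition idS : nat -> Level := LVar.

Definition inI (th : nat -> Level) (j : nat) : Prop :=
  th j <> LVar j \/ exists i, th i <> LVar i /\ j \in vars (th i).

Definition subst_sub (th : nat -> Level) (l : Level) (j : nat) : nat -> Level :=
  fun i => if th i == LVar i then LVar i else lsubst1 l j (th i).

Definition subst_hat (th : nat -> Level) : nat -> Level :=
  fun i => if th i == LVar i then LVar i else hat (th i).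

Definition subst_ext (th : nat -> Level) (i : nat) (l : Level) : nat -> Level :=
  fun x => if x == i then l else th x.

(* A finite set of constraints is represented by a list; "{c} \cup D" is
   matched up to membership (C =i c :: D).  None is bottom. *)
Definition ustate := (seq cstr * (nat -> Level))%type.

Inductive ustep (fresh : pred nat) : ustate -> option ustate -> Prop :=
| st_trivial C D th l :
    C =i (l, l) :: D -> ustep fresh (C, th) (Some (D, th))
| st_orient C D th l l' :
    C =i (l, l') :: D ->
    (l' = LZ \/ exists i, l' = LMax LZ (LVar i)) ->
    ustep fresh (C, th) (Some ((l', l) :: D, th))
| st_elim1 C D th i l :
    C =i (LMax LZ (LVar i), l) :: D ->
    i \notin vars l ->
    ustep fresh (C, th)
      (Some ([seq cnorm (csubst1 l i c) | c <- D],
             subst_ext (subst_hat (subst_sub th l i)) i l))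
| st_elim2 C D th i l i' :
    C =i (LMax LZ (LVar i), l) :: D ->
    (0, Some i) \in atoms l ->
    fresh i' ->
    i' != i -> i' \notin vars l ->
    (forall c, c \in D -> i' \notin cvars c) ->
    ~ inI th i' ->
    let l' := lsubst1 (LVar i') i l in
    ustep fresh (C, th)
      (Some ([seq cnorm (csubst1 l' i c) | c <- D],
             subst_ext (subst_hat (subst_sub th l' i)) i l'))
| st_decompose C D th vs :
    C =i (LZ, nf_level 0 vs) :: D ->
    sorted ltn (map fst vs) -> all (fun p => p.2 == 0) vs ->
    ustep fresh (C, th)
      (Some ([seq (LMax LZ (LVar p.1), LZ) | p <- vs] ++ D, th))
| st_clash C D th l n x :
    C =i (LZ, l) :: D ->
    (n, x) \in atoms l -> n != 0 ->
    ustep fresh (C, th) None.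

Inductive usteps (fresh : pred nat) : option ustate -> option ustate -> Prop :=
| us_refl s : usteps fresh s s
| us_step st s' s'' :
    ustep fresh st s' -> usteps fresh s' s'' -> usteps fresh (Some st) s''.

(* Main.v *)
Require Import Defs.
From mathcomp Require Import all_boot.
From mathcomp Require Import zify.

Set Implicit Arguments.
Unset Strict Implicit.

Fixpoint ev (r : nat -> nat) (l : Level) : nat :=
  match l with
  | LVar i => r i
  | LZ => 0
  | LS l' => (ev r l').+1
  | LMax a b => maxn (ev r a) (ev r b)
  end.

Lemma ev_sound a b : lequiv a b -> forall r, ev r a = ev r b.
Proof.
elim=> {a b} /= => [l|a b _ IH|a b c _ IH1 _ IH2|a b _ IH|a a' b b' _ IH1 _ IH2|l1 l2 l3|l1 l2|l1 l2|l|l|l] r; rewrite ?IH ?IH1 ?IH2; try lia.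
Qed.

Lemma ev_ext r1 r2 l : (forall x, x \in vars l -> r1 x = r2 x) -> ev r1 l = ev r2 l.
Proof.
elim: l => [i||l IH|a IHa b IHb] /= H.
- by apply: H; rewrite inE.
- by [].
- by rewrite IH.
- rewrite IHa ?IHb // => x Hx; apply: H; rewrite mem_cat Hx ?orbT //.
Qed.

Lemma ev_subst r th l : ev r (lsubst th l) = ev (fun i => ev r (th i)) l.
Proof. by elim: l => //= [l ->|a -> b ->]. Qed.

Lemma ev_lsubst1 r l' j l :
  ev r (lsubst1 l' j l) = ev (fun x => if x == j then ev r l' else r x) l.
Proof.
rewrite /lsubst1 ev_subst; apply: ev_ext => x _; by case: (x == j).
Qed.

Lemma ev_sn r n l : ev r (sn n l) = ev r l + n.
Proof. elim: n => [|n IH] /=; [by rewrite addn0 | by rewrite IH addnS]. Qed.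

Definition evJ (r : nat -> nat) (vs : seq (nat * nat)) : nat :=
  foldr (fun p acc => maxn (r p.1 + p.2) acc) 0 vs.

Lemma ev_joinl r vs : ev r (joinl vs) = evJ r vs.
Proof.
elim: vs => [|p [|q vs] IH] //=.
- by rewrite ev_sn /= maxn0.
- by rewrite ev_sn /= IH.
Qed.

Lemma ev_nf r k vs : ev r (nf_level k vs) = maxn k (evJ r vs).
Proof.
case: vs => [|p vs] /=; first by rewrite ev_sn maxn0.
by have /= -> := ev_joinl r (p :: vs); rewrite ev_sn add0n.
Qed.

Lemma ev_ins r p vs : evJ r (ins p vs) = maxn (r p.1 + p.2) (evJ r vs).
Proof.
elim: vs => [|q vs IH] //=.
case: ifP => // _; case: ifP => [/eqP E|_] /=.
- rewrite E addn_maxr; lia.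
- rewrite IH; lia.
Qed.

Lemma ev_merge r vs ws : evJ r (mergeV vs ws) = maxn (evJ r vs) (evJ r ws).
Proof.
elim: vs => [|p vs IH] /=; first by rewrite max0n.
rewrite ev_ins IH; lia.
Qed.

Lemma evJ_map r vs k :
  maxn k.+1 (evJ r [seq (p.1, p.2.+1) | p <- vs]) = (maxn k (evJ r vs)).+1.
Proof.
elim: vs k => [|p vs IH] k /=; first by rewrite !maxn0.
have := IH k; rewrite addnS; lia.
Qed.

Lemma ev_norm r l : ev r l = maxn (norm l).1 (evJ r (norm l).2).
Proof.
elim: l => [i||l IH|a IHa b IHb] /=.
- lia.
- by [].
- case: (norm l) IH => k vs /= ->; by rewrite evJ_map.
- case: (norm a) IHa => ka va /= ->; case: (norm b) IHb => kb vb /= ->.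
  rewrite ev_merge; lia.
Qed.

Lemma evJ_mem r q vs : q \in vs -> r q.1 + q.2 <= evJ r vs.
Proof.
elim: vs => [|p vs IH] //=; rewrite inE => /orP [/eqP ->|/IH]; lia.
Qed.

Lemma evJ_filter r (a : pred (nat * nat)) vs k W :
  maxn k (evJ r vs) = W ->
  (forall p, p \in vs -> ~~ a p -> r p.1 + p.2 < W) ->
  maxn k (evJ r (filter a vs)) = W.
Proof.
elim: vs k => [|p vs IH] k //= E H.
case: ifP => Ha /=.
- rewrite maxnA; apply: IH; first by rewrite -maxnA.
  by move=> q Hq; apply: H; rewrite inE Hq orbT.
- have Hp : r p.1 + p.2 < W by apply: H; rewrite ?inE ?eqxx ?Ha.
  apply: IH; first lia.
  by move=> q Hq; apply: H; rewrite inE Hq orbT.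
Qed.

Lemma evJ_sub r vs k m :
  m <= k -> (forall p, p \in vs -> m <= p.2) ->
  maxn (k - m) (evJ r [seq (p.1, p.2 - m) | p <- vs]) = maxn k (evJ r vs) - m.
Proof.
elim: vs k => [|p vs IH] k /= Hk H; first by rewrite !maxn0.
have Hp : m <= p.2 by apply: H; rewrite inE eqxx.
have := IH (maxn k (r p.1 + p.2)).
have H' : forall q, q \in vs -> m <= q.2 by move=> q Hq; apply: H; rewrite inE Hq orbT.
move=> /(_ ltac:(lia) H').
move: (evJ r [seq _ | _ <- vs]) (evJ r vs) (r p.1) (p.2) Hp => X Y a b Hb; lia.
Qed.

Lemma foldr_minn_le x s : foldr minn x s <= x /\ forall y, y \in s -> foldr minn x s <= y.
Proof.
elim: s => [|y s [IH1 IH2]] /=; first by split.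
split; first lia.
move=> z; rewrite inE => /orP [/eqP ->|/IH2]; lia.
Qed.

Lemma cnorm_data_ok r k1 vs1 k2 vs2 :
  maxn k1 (evJ r vs1) = maxn k2 (evJ r vs2) ->
  ev r (cnorm_data k1 vs1 k2 vs2).1 = ev r (cnorm_data k1 vs1 k2 vs2).2.
Proof.
move=> E; rewrite /cnorm_data /= !ev_nf.
set a1 := (fun p : nat * nat => _) in E *.
set f1 := filter _ vs1; set f2 := filter _ vs2.
set m := foldr minn _ _.
have [Hm1 Hm2] := foldr_minn_le (minn k1 k2) (map snd (f1 ++ f2)).
rewrite -/m in Hm1 Hm2.
have Hf1 : forall p, p \in f1 -> m <= p.2.
  by move=> p Hp; apply: Hm2; apply: map_f; rewrite mem_cat Hp.
have Hf2 : forall p, p \in f2 -> m <= p.2.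
  by move=> p Hp; apply: Hm2; apply: map_f; rewrite mem_cat Hp orbT.
rewrite !evJ_sub //; try lia.
set V := maxn k1 (evJ r vs1).
have -> : maxn k1 (evJ r f1) = V.
  apply: evJ_filter => // p Hp /allPn [q Hq /=].
  rewrite negb_or negbK => /andP [/eqP Eq Hlt].
  have := evJ_mem r Hq; rewrite Eq; lia.
have -> : maxn k2 (evJ r f2) = V.
  apply: evJ_filter; first by rewrite /V E.
  move=> p Hp /allPn [q Hq /=].
  rewrite negb_or negbK => /andP [/eqP Eq Hlt].
  have := evJ_mem r Hq; rewrite Eq; lia.
by [].
Qed.

Lemma cnorm_ok r c : ev r c.1 = ev r c.2 -> ev r (cnorm c).1 = ev r (cnorm c).2.
Proof. by rewrite (ev_norm r c.1) (ev_norm r c.2) => E; apply: cnorm_data_ok. Qed.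

Lemma atoms_le r l n x : (n, x) \in atoms l -> n <= ev r l.
Proof.
elim: l n x => [i||l IH|a IHa b IHb] n x /=.
- by rewrite inE => /eqP [->].
- by rewrite inE => /eqP [->].
- have H : (n, x) \in [seq (p.1.+1, p.2) | p <- atoms l] -> n <= (ev r l).+1.
    case/mapP => [[m y] Hm [-> _]] /=; have := IH m y Hm; lia.
  by case: l IH H => //.
- rewrite mem_cat => /orP [/IHa|/IHb]; lia.
Qed.

Definition natsat (C : seq cstr) := exists r, forall c, c \in C -> ev r c.1 = ev r c.2.

Lemma step_ok fresh s s' : ustep fresh s s' -> natsat s.1 ->
  match s' with Some t => natsat t.1 | None => False end.
Proof.
case=> {s s'}.
- move=> C D th l HC [r Hr] /=; exists r => c Hc; apply: Hr; by rewrite HC inE Hc orbT.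
- move=> C D th l l' HC _ [r Hr] /=; exists r => c; rewrite inE => /orP [/eqP ->|Hc] /=.
  + have := Hr (l, l'); rewrite HC inE eqxx => /(_ isT) /= ->; by [].
  + by apply: Hr; rewrite HC inE Hc orbT.
- move=> C D th i l HC Hi [r Hr] /=; exists r => c' /mapP [c Hc ->].
  apply: cnorm_ok; rewrite /csubst1 /= !ev_lsubst1.
  have Hil : ev r l = r i.
    have := Hr (LMax LZ (LVar i), l); rewrite HC inE eqxx => /(_ isT) /=; lia.
  have E : forall x, ev (fun y => if y == i then ev r l else r y) x = ev r x.
    move=> x; apply: ev_ext => y _; case: eqP => // ->; by [].
  rewrite !E; apply: Hr; by rewrite HC inE Hc orbT.
- move=> C D th i l i' HC _ _ Hii' Hil HD _ l' [r Hr] /=; rewrite /l'.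
  set r' := fun x => if x == i' then r i else r x.
  exists r' => c' /mapP [c Hc ->].
  apply: cnorm_ok; rewrite /csubst1 /= [ev r' (lsubst1 _ i c.1)]ev_lsubst1 [ev r' (lsubst1 _ i c.2)]ev_lsubst1.
  have Hil2 : ev r l = r i.
    have := Hr (LMax LZ (LVar i), l); rewrite HC inE eqxx => /(_ isT) /=; lia.
  have El : ev r' (lsubst1 (LVar i') i l) = r i.
    rewrite ev_lsubst1 -Hil2; apply: ev_ext => y Hy /=.
    rewrite /r' eqxx; case: (y =P i) => [->|_] //.
    case: (y =P i') => // E; by rewrite -E Hy in Hil.
  rewrite El.
  have E : forall x, i' \notin vars x ->
      ev (fun y => if y == i then r i else r' y) x = ev r x.
    move=> x Hx; apply: ev_ext => y Hy; case: eqP => [->|_] //.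
    rewrite /r'; case: eqP => // E; by rewrite -E Hy in Hx.
  have Hc' := HD c Hc; rewrite /cvars mem_cat negb_or in Hc'.
  case/andP: Hc' => H1 H2.
  rewrite !E //; apply: Hr; by rewrite HC inE Hc orbT.
- move=> C D th vs HC _ Hvs [r Hr] /=; exists r => c; rewrite mem_cat => /orP [/mapP [p Hp ->]|Hc] /=.
  + have := Hr (LZ, nf_level 0 vs); rewrite HC inE eqxx => /(_ isT) /=.
    rewrite ev_nf => E; have := evJ_mem r Hp; lia.
  + by apply: Hr; rewrite HC inE Hc orbT.
- move=> C D th l n x HC Hat Hn [r Hr] /=.
  have := Hr (LZ, l); rewrite HC inE eqxx => /(_ isT) /= E.
  have := atoms_le r Hat; lia.
Qed.

Lemma steps_ok fresh s t : usteps fresh s t ->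
  match s with Some u => natsat u.1 | None => False end ->
  match t with Some u => natsat u.1 | None => False end.
Proof.
elim=> // st s' s'' Hst _ IH H; apply: IH; exact: step_ok Hst H.
Qed.

Theorem mainTheorem10 (fresh : pred nat)
  (fresh_infinite : forall n, exists i, n <= i /\ fresh i)
  (fresh_proper : exists i, ~~ fresh i)
  (C : seq cstr)
  (HCnf : forall c, c \in C -> cstr_nf c)
  (HCfresh : forall c, c \in C -> forall i, i \in cvars c -> ~~ fresh i)
  (Hbot : usteps fresh (Some (C, idS)) None) :
  ~ exists theta : nat -> Level, sat theta C.
Proof.
move=> [th Hth]; apply: (steps_ok Hbot) => /=.
exists (fun i => ev (fun _ => 0) (th i)) => c Hc.
by rewrite -!ev_subst; apply: ev_sound; apply: Hth.
Qed.
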